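(* Let $X$ be a time-homogeneous Markov chain on $\mathbf{R}$ with arbitrary initial distribution and renewal measure $U(B)=\sum_{n\ge0}\mathbf{P}\{X_n\in B\}$, whose jumps are nonnegative, $\xi(x)\ge0$ a.s. for all $x$. Suppose there is $A>0$ with $\gamma:=\inf_{x\in\mathbf{R}}\mathbf{P}\{\xi(x)>A\}>0$. Then $U(x,x+h]\le (A+h)/(\gamma^2A)$ for all $x\in\mathbf{R}$ and $h>0$.
   Context: $\xi(x)$ denotes a random variable with $\mathbf{P}\{x+\xi(x)\in B\}=P(x,B)$, $P$ being the transition kernel of the chain. *)

(* Defs.v *)
From HB Require Import structures.
From mathcomp Require Import all_boot all_order all_algebra.
From mathcomp Require Import all_classical all_reals all_analysis.
Set Implicit Arguments. Unset Strict Implicit. Unset Printing Implicit Defensive.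
Import Order.TTheory GRing.Theory Num.Theory.
Local Open Scope classical_set_scope.
Local Open Scope ring_scope.
Local Open Scope ereal_scope.

Definition markov_chain (d : measure_display) (Omega : measurableType d)
  (R : realType) (P : probability Omega R) (X : nat -> Omega -> R)
  (k : R.-pker R ~> R) : Prop :=
  (forall n, measurable_fun setT (X n)) /\
  forall (n : nat) (B : nat -> set R) (C : set R),
    (forall i, measurable (B i)) -> measurable C ->
    P (\bigcap_(i in `I_n.+1) (X i @^-1` B i) `&` (X n.+1 @^-1` C)) =
    \int[P]_(w in \bigcap_(i in `I_n.+1) (X i @^-1` B i)) k (X n w) C.

Definition renewal_measure (d : measure_display) (Omega : measurableType d)
  (R : realType) (P : probability Omega R) (X : nat -> Omega -> R)
  (B : set R) : \bar R :=
  \sum_(0 <= n <oo) P (X n @^-1` B).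

(* gamma = inf_x P{ xi(x) > A } = inf_x k x (x + A, +oo) *)
Definition jump_gamma (R : realType) (k : R.-pker R ~> R) (A : R) : \bar R :=
  ereal_inf (range (fun x : R => k x `]((x + A)%R), +oo[%classic)).

(* Main.v *)
Require Import Defs.
From HB Require Import structures.
From mathcomp Require Import all_boot all_order all_algebra.
From mathcomp Require Import all_classical all_reals all_analysis.
Import Order.TTheory GRing.Theory Num.Theory.
Local Open Scope classical_set_scope.
Local Open Scope ring_scope.
From mathcomp Require Import ring.

Section aux.
Local Open Scope ereal_scope.

Lemma bigcap_one (T : Type) (R : Type) (X : nat -> T -> R) (n : nat) (S : set R) :
  \bigcap_(i in `I_n.+1) (X i @^-1` (if i == n then S else setT)) = X n @^-1` S.
Proof.
apply/seteqP; split => w /=.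
  by move=> /(_ n (ltnSn n)); rewrite eqxx.
move=> HS i _; case: ifP => // /eqP -> //.
Qed.

Lemma mpre (d : measure_display) (Omega : measurableType d) (R : realType)
  (Y : Omega -> R) (S : set R) :
  measurable_fun setT Y -> measurable S -> measurable (Y @^-1` S).
Proof. by move=> mY mS; rewrite -[_ @^-1` _]setTI; apply: mY. Qed.

Lemma markov1 (d : measure_display) (Omega : measurableType d)
  (R : realType) (P : probability Omega R) (X : nat -> Omega -> R)
  (k : R.-pker R ~> R) :
  markov_chain P X k -> forall n (S C : set R), measurable S -> measurable C ->
  P (X n @^-1` S `&` X n.+1 @^-1` C) = \int[P]_(w in X n @^-1` S) k (X n w) C.
Proof.
move=> [mX HM] n S C mS mC.
have := HM n (fun i => if i == n then S else setT) C.
rewrite bigcap_one; apply => // i; case: ifP => //.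
Qed.
Arguments markov1 {d Omega R P X k}.


Lemma step_ineq (d : measure_display) (Omega : measurableType d)
  (R : realType) (P : probability Omega R) (X : nat -> Omega -> R)
  (k : R.-pker R ~> R) (A g x : R) :
  markov_chain P X k ->
  (forall y : R, k y `]-oo, y[%classic = 0) ->
  (forall y : R, g%:E <= k y `](y + A)%R, +oo[%classic) ->
  (0 <= g)%R ->
  forall n,
  g%:E * P (X n @^-1` `]x, (x + A)%R]%classic) + P (X n @^-1` `](x + A)%R, +oo[%classic)
  <= P (X n.+1 @^-1` `](x + A)%R, +oo[%classic).
Proof.
move=> HM Hnn Hg g0 n.
have mX := HM.1.
set t := (x + A)%R.
set I := `]x, t]%classic.
set E1 := X n @^-1` `]t, +oo[%classic.
set E2 := X n @^-1` I.
set F := X n.+1 @^-1` `]t, +oo[%classic.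
set F' := X n.+1 @^-1` `]-oo, t]%classic.
have mE1 : measurable E1 by apply: mpre => //; exact: measurable_itv.
have mE2 : measurable E2 by apply: mpre => //; exact: measurable_itv.
have mF : measurable F by apply: mpre => //; exact: measurable_itv.
have mF' : measurable F' by apply: mpre => //; exact: measurable_itv.
have hE1' : P (E1 `&` F') = 0.
  rewrite (markov1 HM); [|exact: measurable_itv|exact: measurable_itv].
  apply: integral0_eq => w; rewrite /E1 /= in_itv /= andbT => tw.
  apply/eqP; rewrite eq_le measure_ge0 andbT -(Hnn (X n w)).
  apply: le_measure; rewrite ?inE; try exact: measurable_itv.
  by move=> y /=; rewrite !in_itv /= => yt; apply: le_lt_trans yt tw.
have hE1 : P E1 = P (E1 `&` F).
  rewrite -[RHS]adde0 -hE1' -measureU //; last 3 first.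
  - exact: measurableI.
  - exact: measurableI.
  - apply/seteqP; split => w //= [[_ H1] [_ H2]].
    move: H1 H2; rewrite /F /F' /= !in_itv /= andbT => H1 H2.
    by have := lt_le_trans H1 H2; rewrite ltxx.
  congr (P _); apply/seteqP; split => w /=.
    rewrite /E1 /F /F' /= !in_itv /= !andbT => ->.
    by case: (ltP t (X n.+1 w)) => _; [left|right].
  by case=> -[].
have hE2 : g%:E * P E2 <= P (E2 `&` F).
  rewrite (markov1 HM); [|exact: measurable_itv|exact: measurable_itv].
  rewrite -integral_cst //.
  apply: ge0_le_integral => //.
  - have mk := measurable_kernel k _ (measurable_itv `]t, +oo[).
    have h2 : measurable_fun E2 (X n) by exact: measurable_funTS.
    move=> _ Y mY.
    have := mk measurableT Y mY; rewrite setTI => mY'.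
    exact: (h2 mE2 _ mY').
  move=> w; rewrite /E2 /I /= in_itv /= => /andP[xw _].
  apply: (le_trans (Hg (X n w))); apply: le_measure; rewrite ?inE; try exact: measurable_itv.
  move=> y /=; rewrite !in_itv /= !andbT; apply: le_lt_trans.
  by rewrite /t lerD2r ltW.
have hU : P ((E2 `&` F) `|` (E1 `&` F)) = P (E2 `&` F) + P (E1 `&` F).
  rewrite measureU //; try exact: measurableI.
  apply/seteqP; split => w //= [[H1 _] [H2 _]].
  move: H1 H2; rewrite /E1 /E2 /I /= !in_itv /= andbT => /andP[_ H1] H2.
  by have := lt_le_trans H2 H1; rewrite ltxx.
have hle : P ((E2 `&` F) `|` (E1 `&` F)) <= P F.
  apply: le_measure; rewrite ?inE //.
  - by apply: measurableU; apply: measurableI.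
  - by move=> w [] [].
by apply: le_trans hle; rewrite hU hE1 leeD2r. 
Qed.
Arguments step_ineq {d Omega R P X k A g} x.

Lemma tele (R : realType) (a b : nat -> \bar R) (g : R) :
  (0 <= g)%R -> (forall n, 0 <= b n) ->
  (forall n, g%:E * b n + a n <= a n.+1) ->
  forall N, g%:E * (\sum_(0 <= n < N) b n) + a 0%N <= a N.
Proof.
move=> g0 b0 st; elim=> [|N IH]; first by rewrite big_geq // mule0 add0e.
rewrite big_nat_recr //= ge0_muleDr //; last by rewrite sume_ge0.
rewrite (addeC _ (_ * b N)) -addeA.
apply: le_trans (st N); rewrite leeD2l //.
Qed.

Lemma U_unit (d : measure_display) (Omega : measurableType d)
  (R : realType) (P : probability Omega R) (X : nat -> Omega -> R)
  (k : R.-pker R ~> R) (A g x : R) :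
  markov_chain P X k ->
  (forall y : R, k y `]-oo, y[%classic = 0) ->
  (forall y : R, g%:E <= k y `](y + A)%R, +oo[%classic) ->
  (0 < g)%R ->
  renewal_measure P X `]x, (x + A)%R]%classic <= (g^-1)%:E.
Proof.
move=> HM Hnn Hg g0.
have mX := HM.1.
have Hpart : forall N, \sum_(0 <= n < N) P (X n @^-1` `]x, (x + A)%R]%classic) <= (g^-1)%:E.
  move=> N; rewrite -(mul1e (_^-1)%:E) muleC lee_pdivlMl //.
  have T := @tele R _ _ g (ltW g0) (fun n => measure_ge0 _ _) (step_ineq x HM Hnn Hg (ltW g0)) N.
  have m1 : measurable (X N @^-1` `](x + A)%R, +oo[%classic) by apply: mpre => //; exact: measurable_itv.
  apply: le_trans _ (le_trans T (probability_le1 _ m1)).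
  by rewrite leeDl // measure_ge0.
rewrite /renewal_measure.
apply: lime_le; first exact: is_cvg_nneseries.
by apply: nearW.
Qed.
Arguments U_unit {d Omega R P X k A g} x.

Lemma U_mono (d : measure_display) (Omega : measurableType d)
  (R : realType) (P : probability Omega R) (X : nat -> Omega -> R) (B C : set R) :
  (forall n, measurable_fun setT (X n)) -> measurable B -> measurable C -> B `<=` C ->
  renewal_measure P X B <= renewal_measure P X C.
Proof.
move=> mX mB mC BC; apply: lee_nneseries => [n _ _|n _]; first exact: measure_ge0.
apply: le_measure; rewrite ?inE; try exact: mpre.
by move=> w /= /BC.
Qed.

Lemma U_U2 (d : measure_display) (Omega : measurableType d)
  (R : realType) (P : probability Omega R) (X : nat -> Omega -> R) (B C : set R) :
  (forall n, measurable_fun setT (X n)) -> measurable B -> measurable C ->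
  renewal_measure P X (B `|` C) <= renewal_measure P X B + renewal_measure P X C.
Proof.
move=> mX mB mC; rewrite /renewal_measure -nneseriesD => [|n _ _|n _ _]; try exact: measure_ge0.
apply: lee_nneseries => [n _ _|n _]; first exact: measure_ge0.
rewrite preimage_setU; apply: measureU2; exact: mpre.
Qed.
Arguments U_U2 {d Omega R P X B C}.

Lemma U_J (d : measure_display) (Omega : measurableType d)
  (R : realType) (P : probability Omega R) (X : nat -> Omega -> R)
  (k : R.-pker R ~> R) (A g : R) :
  markov_chain P X k ->
  (forall y : R, k y `]-oo, y[%classic = 0) ->
  (forall y : R, g%:E <= k y `](y + A)%R, +oo[%classic) ->
  (0 < g)%R -> (0 < A)%R ->
  forall (J : nat) (x : R),
  renewal_measure P X `]x, (x + J.+1%:R * A)%R]%classic <= (J.+1%:R / g)%:E.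
Proof.
move=> HM Hnn Hg g0 A0; elim=> [|J IH] x.
  by rewrite mul1r div1r; exact: (U_unit _ HM Hnn Hg g0).
have mX := HM.1.
set y := (x + J.+1%:R * A)%R.
apply: (@le_trans _ _ (renewal_measure P X (`]x, y]%classic `|` `]y, (y + A)%R]%classic))).
  apply: U_mono => //; try exact: measurable_itv.
    by apply: measurableU; exact: measurable_itv.
  move=> z /=; rewrite !in_itv /= => /andP[xz zy].
  case: (leP z y) => H; [left|right]; first by rewrite xz.
  by move: zy; rewrite /y (mulrSr _ J.+1) mulrDl mul1r addrA.
apply: le_trans (U_U2 mX (measurable_itv _) (measurable_itv _)) _.
rewrite [X in (_ <= X%:E)](_ : _ = J.+1%:R / g + g^-1)%R; last first.
  by rewrite [in LHS]mulrSr mulrDl div1r.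
rewrite EFinD; apply: leeD; first exact: IH.
exact: (U_unit _ HM Hnn Hg g0).
Qed.

End aux.
Arguments U_J {d Omega R P X k A g}.
Arguments U_mono {d Omega R P X B C}.

Theorem mainTheorem5 (d : measure_display) (Omega : measurableType d)
  (R : realType) (P : probability Omega R) (X : nat -> Omega -> R)
  (k : R.-pker R ~> R) (A : R) :
  markov_chain P X k ->
  (* nonnegative jumps: xi(x) >= 0 a.s., i.e. k x (-oo, x) = 0 *)
  (forall x : R, k x `]-oo, x[%classic = 0%E) ->
  0 < A ->
  (0 < jump_gamma k A)%E ->
  forall (x h : R), 0 < h ->
    (renewal_measure P X `]x, (x + h)%R]%classic <=
     ((A + h) / ((fine (jump_gamma k A)) ^+ 2 * A))%:E)%E.
Proof.
move=> HM Hnn A0 G0 x h h0.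
have mX := HM.1.
set G := jump_gamma k A.
have GleK : forall y, (G <= k y `](y + A)%R, +oo[%classic)%E.
  by move=> y; apply: ereal_inf_lbound; exists y.
have G1 : (G <= 1)%E.
  apply: le_trans (GleK 0) _; rewrite -(prob_kernel (s := k) 0).
  by apply: le_measure; rewrite ?inE //; exact: measurable_itv.
have Gfin : G = (fine G)%:E.
  by rewrite fineK // ge0_fin_numE ?(ltW G0) // (le_lt_trans G1) // ltey.
set g := fine G.
have g0 : 0 < g by rewrite -lte_fin -Gfin.
have g1 : g <= 1 by rewrite -lee_fin -Gfin.
have Hg : forall y, (g%:E <= k y `](y + A)%R, +oo[%classic)%E.
  by move=> y; rewrite -Gfin.
set J := Num.trunc (h / A).
have hJ : h / A < J.+1%:R by apply: truncnS_gt.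
have hJ' : J%:R <= h / A by have /andP[] := truncn_itv (ltW (divr_gt0 h0 A0)).
apply: (@le_trans _ _ (renewal_measure P X `]x, (x + J.+1%:R * A)%R]%classic)).
  apply: U_mono => //; try exact: measurable_itv.
  move=> z /=; rewrite !in_itv /= => /andP[-> zh] /=.
  apply: (le_trans zh); rewrite lerD2l -ler_pdivrMr //; exact: ltW.
apply: le_trans (U_J HM Hnn Hg g0 A0 J x) _.
rewrite lee_fin.
have Ah0 : 0 <= (A + h) / A by apply: divr_ge0; apply: ltW => //; exact: addr_gt0.
have e1 : J.+1%:R <= (A + h) / A.
  by rewrite mulrDl divff ?gt_eqF // -natr1 addrC lerD2l.
rewrite (_ : (A + h) / (g ^+ 2 * A) = ((A + h) / A) / g / g); last first.
  by field; rewrite ?gt_eqF.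
apply: (@le_trans _ _ (((A + h) / A) / g)).
  by rewrite ler_pM2r ?invr_gt0.
rewrite ler_pdivlMr // divfK ?gt_eqF //.
by rewrite ler_pdivlMr // ler_piMr.
Qed.
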